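(* Let $\mathbf{A}\in\mathbb{R}^{(\ell m)\times(qn)}$ be a block matrix with $\ell\times q$ blocks of size $m\times n$, and let $\mathbf{B}=\mathbf{S}_{\ell,m}\mathbf{A}\mathbf{S}_{q,n}^\top$, viewed as an $m\times n$ grid of blocks of size $\ell\times q$. Let $\mathbf{A}_1,\dots,\mathbf{A}_p$ be the distinct nonzero blocks of $\mathbf{A}$, with $\eta_k$ the number of block positions of $\mathbf{A}$ at which $\mathbf{A}_k$ occurs, and $\mathbf{B}_1,\dots,\mathbf{B}_\rho$ the distinct nonzero blocks of $\mathbf{B}$, with $\xi_\kappa$ the number of block positions of $\mathbf{B}$ at which $\mathbf{B}_\kappa$ occurs. Let $C_k=\{(i,j)\in[m]\times[n]:[\mathbf{A}_k]_{ij}\neq0\}$ and $D_\kappa=\{(i,j)\in[\ell]\times[q]:[\mathbf{B}_\kappa]_{ij}\neq0\}$. Then $$\mathrm{card}\Bigl(\bigcup_{k=1}^p C_k\Bigr)=\sum_{\kappa=1}^\rho\xi_\kappa,\qquad \mathrm{card}\Bigl(\bigcup_{\kappa=1}^\rho D_\kappa\Bigr)=\sum_{k=1}^p\eta_k.$$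
   Context: Blocks of $\mathbf{A}$: $\mathbf{A}^{(\gamma,\delta)}_{\alpha\beta}=\mathbf{A}_{(\gamma-1)m+\alpha,(\delta-1)n+\beta}$ for $(\gamma,\delta)\in[\ell]\times[q]$, $(\alpha,\beta)\in[m]\times[n]$. Blocks of $\mathbf{B}$: $\mathbf{B}^{(\alpha,\beta)}_{\gamma\delta}=\mathbf{B}_{(\alpha-1)\ell+\gamma,(\beta-1)q+\delta}$. For $a,b\ge1$, $s=ab$, the shuffle permutation matrix $\mathbf{S}_{a,b}\in\mathbb{R}^{s\times s}$ has row $(i-1)a+j$ equal to $\mathbf{e}_{(j-1)b+i}^\top$ ($i\in[b]$, $j\in[a]$). ''Distinct blocks'' means the set of distinct nonzero matrices occurring among the blocks; zero blocks are not counted. *)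

(* Defs.v *)
From HB Require Import structures.
From mathcomp Require Import all_boot all_order all_algebra.
From mathcomp Require Import reals.
From mathcomp Require Import zify.
Set Implicit Arguments. Unset Strict Implicit. Unset Printing Implicit Defensive.
Import GRing.Theory.

(* All indices are 0-based: the paper's index (γ-1)m+α with γ∈[ℓ], α∈[m]
   becomes g*m+a with g<ℓ, a<m. *)

Lemma idx_lt (l m : nat) (g : 'I_l) (a : 'I_m) : g * m + a < l * m.
Proof.
have hg := ltn_ord g; have ha := ltn_ord a.
have : g.+1 * m <= l * m by rewrite leq_mul2r hg orbT.
rewrite mulSn; lia.
Qed.

Lemma idxT_lt (l m : nat) (a : 'I_m) (g : 'I_l) : a * l + g < l * m.
Proof.
have hg := ltn_ord g; have ha := ltn_ord a.
have : a.+1 * l <= m * l by rewrite leq_mul2r ha orbT.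
rewrite mulSn (mulnC l m); lia.
Qed.

Definition idxA (l m : nat) (g : 'I_l) (a : 'I_m) : 'I_(l * m) :=
  Ordinal (idx_lt g a).
Definition idxB (l m : nat) (a : 'I_m) (g : 'I_l) : 'I_(l * m) :=
  Ordinal (idxT_lt a g).

Section Blocks.
Variable R : realType.

(* Shuffle permutation matrix S_{a,b}: row i*a+j (i<b, j<a) is e_{j*b+i}^T.
   Since j = r %% a and i = r %/ a for r = i*a+j, entry (r,c) is 1 iff
   c = (r %% a) * b + r %/ a. *)
Definition shuffle (a b : nat) : 'M[R]_(a * b) :=
  \matrix_(r, c) (((c : nat) == (r %% a) * b + r %/ a)%N%:R)%R.

Definition blockA (l m q n : nat) (A : 'M[R]_(l * m, q * n)) (g : 'I_l) (d : 'I_q)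
  : 'M[R]_(m, n) := \matrix_(a, b) A (idxA g a) (idxA d b).

Definition blockB (l m q n : nat) (B : 'M[R]_(l * m, q * n)) (a : 'I_m) (b : 'I_n)
  : 'M[R]_(l, q) := \matrix_(g, d) B (idxB a g) (idxB b d).

Definition distinct_blocksA l m q n (A : 'M[R]_(l * m, q * n)) : seq 'M[R]_(m, n) :=
  undup [seq blockA A p.1 p.2 | p <- enum [set: 'I_l * 'I_q] & blockA A p.1 p.2 != 0%R].
Definition distinct_blocksB l m q n (B : 'M[R]_(l * m, q * n)) : seq 'M[R]_(l, q) :=
  undup [seq blockB B p.1 p.2 | p <- enum [set: 'I_m * 'I_n] & blockB B p.1 p.2 != 0%R].

Definition etaA l m q n (A : 'M[R]_(l * m, q * n)) (M : 'M[R]_(m, n)) : nat :=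
  #|[set p : 'I_l * 'I_q | blockA A p.1 p.2 == M]|.
Definition xiB l m q n (B : 'M[R]_(l * m, q * n)) (M : 'M[R]_(l, q)) : nat :=
  #|[set p : 'I_m * 'I_n | blockB B p.1 p.2 == M]|.

Definition supp r c (M : 'M[R]_(r, c)) : {set 'I_r * 'I_c} :=
  [set p | M p.1 p.2 != 0%R].

End Blocks.

(* Main.v *)
Require Import Defs.
From HB Require Import structures.
From mathcomp Require Import all_boot all_order all_algebra.
From mathcomp Require Import reals.
Import GRing.Theory.
Lemma sum_count (T : finType) (V : eqType) (f : T -> V) (z : V) :
  \sum_(v <- undup [seq f p | p <- enum [set: T] & f p != z]) #|[set p | f p == v]|
  = #|[set p | f p != z]|.
Proof.
set s := undup _.
have us : uniq s by apply: undup_uniq.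
have ms : forall p, (f p \in s) = (f p != z).
  move=> p; rewrite mem_undup; apply/mapP/idP.
    by case=> p'; rewrite mem_filter => /andP[h _] ->.
  by move=> h; exists p => //; rewrite mem_filter h mem_enum inE.
transitivity (\sum_(v <- s) \sum_p (f p == v : nat)).
  apply: eq_bigr. move=> v _; rewrite -sum1_card big_mkcond /=.
  apply: (@eq_bigr nat 0 addn) => p _. rewrite inE. by case: (f p == v).
rewrite exchange_big /= -sum1_card [RHS]big_mkcond /=.
apply: eq_bigr => p _; rewrite inE -ms.
rewrite -[if _ then _ else _]/(nat_of_bool (f p \in s)) -(count_uniq_mem _ us) -sum1_count [RHS]big_mkcond /=.
by apply: eq_bigr => v _; rewrite eq_sym; case: (_ == _).
Qed.

Lemma in_bigcup_seq (T : finType) (I : Type) (s : seq I) (F : I -> {set T}) x :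
  (x \in \bigcup_(i <- s) F i) = has (fun i => x \in F i) s.
Proof. by elim: s => [|i s IH]; rewrite ?big_nil ?big_cons ?inE //= IH. Qed.

Section S.
Variable R : realType.
Local Open Scope ring_scope.

Lemma shuffle_mul (a b p : nat) (M : 'M[R]_(a * b, p)) (x : 'I_b) (y : 'I_a) c :
  (shuffle R a b *m M) (idxB x y) c = M (idxA y x) c.
Proof.
have a0 : (0 < a)%N by case: y => [y' Hy]; apply: leq_ltn_trans Hy.
rewrite mxE (bigD1 (idxA y x)) //= big1 ?addr0.
  rewrite /shuffle mxE /=.
  rewrite modnMDl divnMDl // (modn_small (ltn_ord y)) (divn_small (ltn_ord y)) addn0.
  by rewrite eqxx mul1r.
move=> j hj; rewrite /shuffle mxE.
suff -> : (j == (x * a + y) %% a * b + (x * a + y) %/ a :> nat)%N = false by rewrite mul0r.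
rewrite modnMDl divnMDl // (modn_small (ltn_ord y)) (divn_small (ltn_ord y)) addn0.
by apply/negbTE; apply: contra hj => /eqP h; apply/eqP/val_inj.
Qed.

Lemma keyB l m q n (A : 'M[R]_(l * m, q * n)) a b g d :
  let B := (shuffle R l m *m A *m (shuffle R q n)^T) in
  blockB B a b g d = blockA A g d a b.
Proof.
have H : shuffle R l m *m A *m (shuffle R q n)^T
  = (shuffle R q n *m (shuffle R l m *m A)^T)^T by rewrite trmx_mul trmxK.
rewrite /= /blockB /blockA H [LHS]mxE [RHS]mxE [LHS]mxE shuffle_mul [LHS]mxE.
by rewrite shuffle_mul.
Qed.

Lemma union_supp (T : finType) r c (F : T -> 'M[R]_(r,c)) (x : 'I_r * 'I_c) :
  (x \in \bigcup_(M <- undup [seq F p | p <- enum [set: T] & F p != 0]) supp M)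
  = [exists p, F p x.1 x.2 != 0].
Proof.
rewrite in_bigcup_seq; apply/hasP/existsP.
  case=> M; rewrite mem_undup => /mapP[p _ ->]; rewrite /supp inE => h.
  by exists p.
case=> p h; exists (F p); last by rewrite /supp inE.
rewrite mem_undup; apply: map_f; rewrite mem_filter mem_enum inE andbT.
by apply: contraNneq h => ->; rewrite mxE.
Qed.

Lemma mx_neq0 r c (M : 'M[R]_(r,c)) : (M != 0) = [exists p : 'I_r * 'I_c, M p.1 p.2 != 0].
Proof.
apply/idP/idP.
  move=> h; case: (boolP [exists p : 'I_r * 'I_c, M p.1 p.2 != 0]) => // /fintype.existsPn H.
  case/negP: h; apply/eqP/matrixP => i j; rewrite mxE.
  by have := H (i, j); rewrite negbK => /eqP.
by case/existsP=> p; apply: contraNneq => ->; rewrite mxE.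
Qed.
End S.

Theorem theorem4 (R : realType) (l m q n : nat) (A : 'M[R]_(l * m, q * n)) :
  let B := (shuffle R l m *m A *m (shuffle R q n)^T)%R in
  #|\bigcup_(Ak <- distinct_blocksA A) supp Ak|
    = \sum_(Bk <- distinct_blocksB B) xiB B Bk
  /\
  #|\bigcup_(Bk <- distinct_blocksB B) supp Bk|
    = \sum_(Ak <- distinct_blocksA A) etaA A Ak.
Proof.
move=> B; split.
  rewrite /distinct_blocksB /xiB (@sum_count _ _ (fun p : 'I_m * 'I_n => blockB B p.1 p.2) 0%R).
  apply: eq_card => x; rewrite /distinct_blocksA.
  rewrite (@union_supp R _ _ _ (fun p : 'I_l * 'I_q => blockA A p.1 p.2)) inE mx_neq0.
  by apply: eq_existsb => p; rewrite keyB.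
rewrite /distinct_blocksA /etaA (@sum_count _ _ (fun p : 'I_l * 'I_q => blockA A p.1 p.2) 0%R).
apply: eq_card => x; rewrite /distinct_blocksB.
rewrite (@union_supp R _ _ _ (fun p : 'I_m * 'I_n => blockB B p.1 p.2)) inE mx_neq0.
by apply: eq_existsb => p; rewrite keyB.
Qed.
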